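(* Let $G$ be a graph with vertex set $[n]$ and let $P$ be a monomial in $\mathcal E_G$. Then $P$ is simple if and only if $P$ has no repeated variables and $\operatorname{supp}(P)$ has no cycles. Moreover, if $P$ is simple, then $\Pi(P)$ is the set partition of $[n]$ given by the cycles of $\sigma_P$.
   Context: The Fomin–Kirillov algebra $\mathcal E_n$ is the quadratic $\mathbf Q$-algebra with generators $x_{ij}=-x_{ji}$ for distinct $i,j\in[n]$, subject to the relations: $x_{ij}^2=0$ for distinct $i,j$; $x_{ij}x_{kl}=x_{kl}x_{ij}$ for distinct $i,j,k,l$; and $x_{ij}x_{jk}+x_{jk}x_{ki}+x_{ki}x_{ij}=0$ for distinct $i,j,k$. For a graph $G$ on vertex set $[n]$, $\mathcal E_G$ is the subalgebra of $\mathcal E_n$ generated by the $x_{ij}$ with $\overline{ij}$ an edge of $G$. A monomial is a product $P=x_{i_1j_1}\cdots x_{i_dj_d}$ of generators (with edges in $G$); its degree is $d(P)=d$; its $S_n$-degree is $\sigma_P=(i_1\;j_1)\cdots(i_d\;j_d)\in S_n$; $\operatorname{supp}(P)$ is the subgraph of $G$ (on vertex set $[n]$) whose edges are the $\overline{ij}$ with $x_{ij}$ appearing in $P$; and $\Pi(P)$ is the set partition of $[n]$ into the vertex sets of the connected components of $\operatorname{supp}(P)$. A monomial $P$ is called simple if $\sigma_P$ has exactly $n-d(P)$ cycles (counting fixed points). *)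

(* Defs.v *)
From mathcomp Require Import all_boot all_fingroup.
Set Implicit Arguments. Unset Strict Implicit. Unset Printing Implicit Defensive.

(* Vertex set [n] is 'I_n.  A graph G is a symmetric irreflexive relation.
   A monomial P = x_{i1 j1} ... x_{id jd} is recorded as its word of ordered
   pairs [:: (i1,j1); ...; (id,jd)]. *)
Section FK.
Variable n : nat.
Implicit Types (G : rel 'I_n) (P : seq ('I_n * 'I_n)).

Definition is_monomial G P : Prop :=
  forall e, e \in P -> (e.1 != e.2) && G e.1 e.2.

Definition mdeg P : nat := size P.

Definition sigma P : {perm 'I_n} := \prod_(e <- P) tperm e.1 e.2.

Definition is_simple P : Prop := #|porbits (sigma P)| + mdeg P = n.

(* the variable x_ij = -x_ji corresponds to the unordered edge {i,j} *)
Definition var_of (e : 'I_n * 'I_n) : {set 'I_n} := [set e.1; e.2].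

Definition no_repeated_vars P : Prop := uniq (map var_of P).

Definition supp P : rel 'I_n :=
  fun x y => has (fun e => ((e.1 == x) && (e.2 == y)) || ((e.1 == y) && (e.2 == x))) P.

Definition has_cycle (E : rel 'I_n) : Prop :=
  exists s : seq 'I_n, [/\ uniq s, 3 <= size s & path.cycle E s].

Definition Pi P : {set {set 'I_n}} :=
  [set [set y | connect (supp P) x y] | x : 'I_n].
End FK.

(* Main.v *)
Require Import Defs.
From mathcomp Require Import all_boot all_fingroup.
From mathcomp Require Import zify.
Set Implicit Arguments. Unset Strict Implicit. Unset Printing Implicit Defensive.

Section Perm.
Variable T : finType.
Implicit Types (s : {perm T}) (a b c d x y : T).

Lemma iter_neq s a k : 0 < k < #|porbit s a| -> iter k s a != a.
Proof.
move=> /andP[k0 kN].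
have U := uniq_traject_porbit s a.
have N0 : 0 < #|porbit s a| by apply: leq_ltn_trans kN.
have := nth_uniq a (i:=k) (j:=0) (s:=traject s a #|porbit s a|).
rewrite size_traject kN N0 => /(_ isT isT U).
rewrite (nth_traject _ kN) (nth_traject _ N0) /= => ->.
by rewrite -lt0n.
Qed.

Lemma iter_mem s a k : iter k s a \in porbit s a.
Proof. by rewrite -permX mem_porbit. Qed.

Lemma merge_sub s a b : a \notin porbit s b ->
  {subset porbit s a <= porbit (tperm a b * s)%g b}.
Proof.
move=> Hab.
have bnA : b \notin porbit s a by rewrite porbit_sym.
have ab : a != b by apply: contraNneq Hab => ->; apply: porbit_id.
set N := #|porbit s a|.
have Np : 0 < N by rewrite lt0n card_porbit_neq0.
have key : forall k, 0 < k <= N -> iter k (tperm a b * s)%g b = iter k s a.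
  elim=> // k IH /andP[_ kN].
  case: k IH kN => [|k] IH kN; first by rewrite /= permM tpermR.
  rewrite iterS IH ?(ltnW kN) // iterS permM tpermD //.
    by rewrite eq_sym -iterS; apply: iter_neq.
  by apply: contraNneq bnA => ->; rewrite -iterS; apply: iter_mem.
move=> y; rewrite porbit_traject => /trajectP[j jN ->].
case: j jN => [|j] jN.
  rewrite /= -{1}(iter_porbit s a) -/N -key ?Np ?leqnn //.
  by rewrite -permX mem_porbit.
rewrite -key ?(ltnW jN) //; exact: iter_mem.
Qed.

Lemma unchanged s a b c : c \notin porbit s a -> c \notin porbit s b ->
  {subset porbit s c <= porbit (tperm a b * s)%g c}.
Proof.
move=> Ha Hb y /porbitP[i ->]; rewrite permX.
have -> : iter i s c = iter i (tperm a b * s)%g c.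
  elim: i => //= i <-.
  rewrite permM tpermD //.
    by apply: contraNneq Ha => ->; rewrite porbit_sym iter_mem.
  by apply: contraNneq Hb => ->; rewrite porbit_sym iter_mem.
exact: iter_mem.
Qed.

Lemma edge_keep s a b c d : a \notin porbit s b -> d \in porbit s c ->
  d \in porbit (tperm a b * s)%g c.
Proof.
move=> Hab Hdc.
have Hba : b \notin porbit s a by rewrite porbit_sym.
have aInb : a \in porbit (tperm a b * s)%g b by apply: merge_sub _ (porbit_id _ _).
have Sb : {subset porbit s b <= porbit (tperm a b * s)%g b}.
  move=> y Hy; have := merge_sub Hba Hy; rewrite tpermC.
  by move/eqP: (introT eqP (aInb)); rewrite -eq_porbit_mem => /eqP <-.
have Sa := merge_sub Hab.
case Hca: (c \in porbit s a).
  have E : porbit s c = porbit s a by apply/eqP; rewrite eq_porbit_mem.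
  have E' : porbit (tperm a b * s)%g c = porbit (tperm a b * s)%g b.
    by apply/eqP; rewrite eq_porbit_mem; apply: Sa.
  by rewrite E'; apply: Sa; rewrite -E.
case Hcb: (c \in porbit s b).
  have E : porbit s c = porbit s b by apply/eqP; rewrite eq_porbit_mem.
  have E' : porbit (tperm a b * s)%g c = porbit (tperm a b * s)%g b.
    by apply/eqP; rewrite eq_porbit_mem; apply: Sb.
  by rewrite E'; apply: Sb; rewrite -E.
by apply: unchanged => //; rewrite ?Hca ?Hcb.
Qed.

Lemma card_porbits1 : #|porbits (1 : {perm T})| = #|T|.
Proof.
rewrite /porbits card_imset // => x y E.
have : x \in porbit 1 y by rewrite -E porbit_id.
by case/porbitP=> i ->; rewrite expg1n perm1.
Qed.

End Perm.

Section G.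
Variable n : nat.
Implicit Types (P : seq ('I_n * 'I_n)) (x y a b : 'I_n).

Definition loopless P := all (fun e : 'I_n * 'I_n => e.1 != e.2) P.

Lemma supp_cons a b P x y : supp ((a, b) :: P) x y =
  ((a == x) && (b == y) || (a == y) && (b == x)) || supp P x y.
Proof. by []. Qed.

Lemma supp_sym P : symmetric (supp P).
Proof. by move=> x y; apply: eq_has => e; rewrite orbC. Qed.

Lemma sigma_cons (e : 'I_n * 'I_n) P : sigma (e :: P) = (tperm e.1 e.2 * sigma P)%g.
Proof. by rewrite /sigma big_cons. Qed.

Lemma supp_sub e P : subrel (supp P) (supp (e :: P)).
Proof. by case: e => a b x y H; rewrite supp_cons H orbT. Qed.

Lemma conn_sigma P x : connect (supp P) x (sigma P x).
Proof.
elim: P x => [|[a b] P IH] x; first by rewrite /sigma big_nil perm1 connect0.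
rewrite sigma_cons permM /=.
apply: (connect_trans (y := tperm a b x)).
  case: (tpermP a b x) => [->|->|]; last by rewrite connect0.
    by apply: connect1; rewrite supp_cons !eqxx.
  by apply: connect1; rewrite supp_cons !eqxx orbT.
apply: (connect_sub (e := supp P)) (IH _) => u v H.
by apply: connect1; apply: supp_sub.
Qed.

Lemma orbit_conn P x y : y \in porbit (sigma P) x -> connect (supp P) x y.
Proof.
case/porbitP=> i ->; rewrite permX.
elim: i => [|i IH]; first exact: connect0.
by apply: connect_trans IH _; rewrite iterS; apply: conn_sigma.
Qed.

Lemma count_ge P : loopless P -> n <= #|porbits (sigma P)| + size P.
Proof.
elim: P => [|[a b] P IH] /=.
  by rewrite /sigma big_nil card_porbits1 card_ord addn0.
case/andP=> ab /IH H.
have := porbits_mul_tperm (sigma P) a b; rewrite /= ab -(sigma_cons (a, b)).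
move: H; set k0 := #|porbits (sigma P)|; set k1 := #|porbits (sigma _)|.
case: (a \in porbit _ _) => /=; rewrite -?mul2n; lia.
Qed.

Lemma simple_cons (e : 'I_n * 'I_n) P : loopless (e :: P) ->
  is_simple (e :: P) <-> is_simple P /\ e.1 \notin porbit (sigma P) e.2.
Proof.
case: e => a b /= /andP[ab L].
have H := count_ge L.
rewrite /is_simple /mdeg /=.
have := porbits_mul_tperm (sigma P) a b; rewrite /= ab -(sigma_cons (a, b)).
move: H; set k0 := #|porbits (sigma P)|; set k1 := #|porbits (sigma _)|.
case: (a \in porbit _ _) => /=; rewrite -?mul2n => E H; split.
- move=> F; exfalso; lia.
- by case.
- move=> F; split=> //; lia.
- case=> F _; lia.
Qed.

Lemma simple_edges P : loopless P -> is_simple P ->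
  forall e, e \in P -> e.2 \in porbit (sigma P) e.1.
Proof.
elim: P => [|[a b] P IH] // L S.
have [S' Hab] := (simple_cons L).1 S; simpl in Hab.
case/andP: L => /= _ L.
rewrite sigma_cons /= => e; rewrite inE => /orP[/eqP -> /=|eP].
  rewrite porbit_sym; apply: (merge_sub Hab); exact: porbit_id.
by apply: edge_keep Hab _; apply: IH.
Qed.

Lemma conn_orbit P x y : (forall e, e \in P -> e.2 \in porbit (sigma P) e.1) ->
  connect (supp P) x y -> y \in porbit (sigma P) x.
Proof.
move=> HE /connectP[p pp ->].
elim: p x pp => [|z p IHp] x /=; first by move=> _; exact: porbit_id.
case/andP=> /hasP[e eP /orP[/andP[/eqP E1 /eqP E2]|/andP[/eqP E1 /eqP E2]]] pp.
  have := HE e eP; rewrite E1 E2 -eq_porbit_mem => /eqP <-; exact: IHp.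
have := HE e eP; rewrite E1 E2 porbit_sym -eq_porbit_mem => /eqP <-; exact: IHp.
Qed.

Lemma simple_comp P : loopless P -> is_simple P ->
  forall x, porbit (sigma P) x = [set y | connect (supp P) x y].
Proof.
move=> L S x; apply/setP => y; rewrite inE; apply/idP/idP.
  exact: orbit_conn.
exact: conn_orbit (simple_edges L S).
Qed.

End G.

Section G2.
Variable n : nat.
Implicit Types (P : seq ('I_n * 'I_n)) (x y a b c d : 'I_n).

Lemma var_supp a b P (e : 'I_n * 'I_n) : a != b -> e \in P ->
  var_of e = var_of (a, b) -> supp P a b.
Proof.
move=> ab eP E; apply/hasP; exists e => //.
have Ha : a \in var_of e by rewrite E !inE eqxx.
have Hb : b \in var_of e by rewrite E !inE eqxx orbT.
move: Ha Hb; rewrite !inE.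
case/orP=> /eqP Ha; case/orP=> /eqP Hb.
- by move: ab; rewrite Ha Hb eqxx.
- by rewrite Ha Hb !eqxx.
- by rewrite Ha Hb !eqxx orbT.
- by move: ab; rewrite Ha Hb eqxx.
Qed.

Lemma supp_off a b P x y : ~~ ((x == a) && (y == b)) -> ~~ ((x == b) && (y == a)) ->
  supp ((a, b) :: P) x y -> supp P x y.
Proof.
move=> H1 H2; rewrite supp_cons => /orP[/orP[/andP[/eqP ax /eqP bY]|/andP[/eqP ay /eqP bx]]|//].
  by move: H1; rewrite ax bY !eqxx.
by move: H2; rewrite ay bx !eqxx.
Qed.

Lemma all_neq a (s : seq 'I_n) : a \notin s -> all (predC1 a) s.
Proof.
move=> H; apply/allP => x xs /=; apply: contraNneq H => <-; exact: xs.
Qed.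

Lemma forest_cons a b P : a != b ->
  (no_repeated_vars ((a, b) :: P) /\ ~ has_cycle (supp ((a, b) :: P))) <->
  (no_repeated_vars P /\ ~ has_cycle (supp P)) /\ ~~ connect (supp P) a b.
Proof.
move=> ab; have Csym := sym_connect_sym (supp_sym P).
split.
  rewrite /no_repeated_vars /= => -[/andP[nin U] NC].
  split; first split=> //.
    move=> [s [us ss cs]]; apply: NC; exists s; split=> //.
    exact: sub_cycle (@supp_sub _ (a, b) P) _ cs.
  apply/negP => /connectP[p pp lastp].
  move: lastp; case: (shortenP pp) => p' pp' up' _ lastp'.
  case: p' pp' up' lastp' => [|c [|d q]] pp' up' /= lastp'.
  - by move: ab; rewrite lastp' eqxx.
  - move: pp' => /= /andP[Hac _]; rewrite -lastp' in Hac.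
    case/hasP: Hac => e eP /orP[/andP[/eqP E1 /eqP E2]|/andP[/eqP E1 /eqP E2]].
      move/negP: nin; apply; apply/mapP; exists e => //.
      by rewrite /var_of E1 E2.
    move/negP: nin; apply; apply/mapP; exists e => //.
    by rewrite /var_of E1 E2 setUC.
  - apply: NC; exists [:: a, c, d & q]; split=> //.
    change (path (supp ((a, b) :: P)) a (rcons [:: c, d & q] a)).
    rewrite rcons_path; apply/andP; split.
      by apply: (sub_path (@supp_sub _ (a, b) P)); exact: pp'.
    have -> : last a [:: c, d & q] = b by rewrite lastp'.
    by rewrite supp_cons !eqxx orbT.
case=> -[U NC] NCab; split.
  rewrite /no_repeated_vars /= U andbT.
  apply/mapP => -[e eP E]; move/negP: NCab; apply.
  apply: connect1; exact: var_supp ab eP (esym E).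
move=> [s [us ss cs]].
have sub_a : {in predC1 a &, subrel (supp ((a, b) :: P)) (supp P)}.
  move=> x y /= xa ya; apply: supp_off.
    by rewrite (negbTE xa).
  by rewrite (negbTE ya) andbF.
case: (boolP (a \in s)) => As; last first.
  apply: NC; exists s; split=> //; exact: (sub_in_cycle sub_a (all_neq As) cs).
case: (rot_to As) => i s' E.
have cs' : path.cycle (supp ((a, b) :: P)) (a :: s') by rewrite -E rot_cycle.
have us' : uniq (a :: s') by rewrite -E rot_uniq.
have ss' : 3 <= size (a :: s') by rewrite -E size_rot.
case: s' E cs' us' ss' => [|c q] E cs' us' ss' //.
case/lastP: q E cs' us' ss' => [|r d] E cs' us' ss' //.
have cs2 : path (supp ((a, b) :: P)) a (rcons (c :: rcons r d) a) := cs'.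
rewrite rcons_path (_ : last a (c :: rcons r d) = d) in cs2; last by rewrite /= last_rcons.
case/andP: cs2 => /andP[Rac pR] Rda.
case/andP: us' => anin us'.
have cd : c != d.
  apply: contraTneq us' => <-; rewrite /= mem_rcons inE eqxx /=; done.
have pR' : path (supp P) c (rcons r d).
  exact: (sub_in_path sub_a (all_neq anin) pR).
have ca : c != a by apply: contraNneq anin => ->; rewrite inE eqxx.
have da : d != a by apply: contraNneq anin => ->; rewrite inE mem_rcons inE eqxx orbT.
case: (eqVneq c b) => [cb|cb].
  move/negP: NCab; apply; rewrite Csym; apply/connectP.
  exists (rcons (rcons r d) a); last by rewrite last_rcons.
  rewrite rcons_path last_rcons -cb pR' /=.
  apply: supp_off Rda; first by rewrite (negbTE da).
  by rewrite eqxx andbT -cb eq_sym (negbTE cd).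
have Rac' : supp P a c.
  apply: supp_off Rac; first by rewrite eqxx (negbTE cb).
  by rewrite (negbTE ab).
case: (eqVneq d b) => [db|db].
  move/negP: NCab; apply; apply/connectP.
  exists (c :: rcons r d); last by rewrite /= last_rcons db.
  by rewrite /= Rac' pR'.
have Rda' : supp P d a.
  apply: supp_off Rda; first by rewrite (negbTE da).
  by rewrite (negbTE db).
apply: NC; exists [:: a, c & rcons r d]; split=> //.
  by rewrite /= anin us'.
have -> : path.cycle (supp P) [:: a, c & rcons r d] =
  path (supp P) a (rcons (c :: rcons r d) a) by [].
rewrite rcons_path (_ : last a (c :: rcons r d) = d); last by rewrite /= last_rcons.
by rewrite /= Rac' pR' Rda'.
Qed.
End G2.
Lemma charac n (P : seq ('I_n * 'I_n)) : loopless P ->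
  is_simple P <-> no_repeated_vars P /\ ~ has_cycle (supp P).
Proof.
elim: P => [|[a b] P IH] L.
  split=> _.
    split=> // -[[|x p] [_ ss cs]] //.
    move: cs; rewrite /path.cycle; case: (rcons p x) (size_rcons p x) => //.
  by rewrite /is_simple /mdeg /sigma big_nil card_porbits1 card_ord addn0.
have /andP[ab LP] := L.
have Csym := sym_connect_sym (supp_sym P).
rewrite (simple_cons L) (forest_cons P ab) -(IH LP) /=.
split=> -[S H]; split=> //.
  by rewrite Csym; move: H; rewrite (simple_comp LP S) inE.
by rewrite (simple_comp LP S) inE -Csym.
Qed.

Theorem proposition2p4 (n : nat) (G : rel 'I_n)
    (HGsym : symmetric G) (HGirr : irreflexive G)
    (P : seq ('I_n * 'I_n)) (HP : is_monomial G P) :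
  (is_simple P <-> no_repeated_vars P /\ ~ has_cycle (supp P)) /\
  (is_simple P -> Pi P = porbits (sigma P)).
Proof.
have L : loopless P by apply/allP => e /HP /andP[].
split; first exact: charac.
move=> S; rewrite /Pi /porbits; apply: eq_imset => x.
by rewrite (simple_comp L S).
Qed.
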